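(* Let $S$ be a left amenable group, written additively, and let $X=Z^{*}$ be a dual Banach space. Let $W_{wbc}(X)$ be the family of all nonempty weak$^{*}$-closed, bounded, convex subsets of $X$, and let $F:S\to W_{wbc}(X)$ be a multi-valued map. Then $F$ admits an additive selection, i.e. a map $g:S\to X$ with $g(s+t)=g(s)+g(t)$ for all $s,t\in S$ and $g(s)\in F(s)$ for all $s\in S$, if and only if there exists a function $f:S\to X$ such that $f(s+t)-f(t)\in F(s)$ for all $s,t\in S$.
   Context: $S$ is left amenable if there is a norm-one linear functional $m$ on $\ell_\infty(S)$ with $m(e)=1$ ($e$ the constant function $1$) and $m(f)=m(f_s)$ for all $f\in\ell_\infty(S)$ and $s\in S$, where $f_s(t)=f(s+t)$. *)

(* Defs.v *)
From HB Require Import structures.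
From mathcomp Require Import all_boot all_order all_algebra.
From mathcomp Require Import all_classical all_reals all_analysis.
Set Implicit Arguments. Unset Strict Implicit. Unset Printing Implicit Defensive.
Import Order.TTheory GRing.Theory Num.Theory.
Import numFieldNormedType.Exports.
Local Open Scope classical_set_scope.
Local Open Scope ring_scope.

Definition is_group (S : Type) (add : S -> S -> S) (zero : S) (opp : S -> S) :=
  [/\ forall a b c, add a (add b c) = add (add a b) c,
      forall a, add zero a = a /\ add a zero = a
    & forall a, add (opp a) a = zero /\ add a (opp a) = zero].

Definition bounded_fun (R : realType) (S : Type) (f : S -> R) :=
  exists M : R, forall t, `|f t| <= M.

(* Norm <= 1 is written out as
   |m f| <= M whenever |f t| <= M for all t; together with m(e)=1 the norm
   is exactly one. *)
Definition left_amenable (R : realType) (S : Type) (add : S -> S -> S) :=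
  exists m : (S -> R) -> R,
    [/\ forall (a : R) (f g : S -> R), bounded_fun f -> bounded_fun g ->
          m (fun t => a * f t + g t) = a * m f + m g,
        forall (f : S -> R) (M : R), (forall t, `|f t| <= M) -> `|m f| <= M,
        m (fun _ => 1) = 1
      & forall (f : S -> R) (s : S), bounded_fun f ->
          m f = m (fun t => f (add s t))].

Definition dual_elt (R : realType) (Z : normedModType R) (phi : Z -> R) :=
  (forall (a : R) (x y : Z), phi (a *: x + y) = a * phi x + phi y)
  /\ continuous phi.

(* weak*-closed: the complement (in X) is open for the weak* topology, i.e.
   every phi in X \ A has a basic weak*-neighbourhood disjoint from A. *)
Definition weak_star_closed (R : realType) (Z : normedModType R)
    (A : set (Z -> R)) :=
  forall phi, dual_elt phi -> ~ A phi ->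
    exists (zs : seq Z) (e : R), 0 < e /\
      forall psi, dual_elt psi ->
        (forall z, z \in zs -> `|psi z - phi z| < e) -> ~ A psi.

Definition dual_bounded (R : realType) (Z : normedModType R)
    (A : set (Z -> R)) :=
  exists M : R, forall phi, A phi -> forall z, `|phi z| <= M * `|z|.

Definition dual_convex (R : realType) (Z : normedModType R)
    (A : set (Z -> R)) :=
  forall phi psi (a : R), A phi -> A psi -> 0 <= a -> a <= 1 ->
    A (fun z => a * phi z + (1 - a) * psi z).

Definition W_wbc (R : realType) (Z : normedModType R) (A : set (Z -> R)) :=
  [/\ A `<=` (@dual_elt R Z), A !=set0, weak_star_closed A,
      dual_bounded A & dual_convex A].

(* Main.v *)
From Pilot Require Import Defs.
From mathcomp Require Import all_boot all_order all_algebra.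
From mathcomp Require Import all_classical all_reals all_analysis.
From mathcomp Require Import ring lra.
Import Order.TTheory GRing.Theory Num.Theory.
Import numFieldNormedType.Exports.
Local Open Scope classical_set_scope.
Local Open Scope ring_scope.

Notation bfun := Pilot.Defs.bounded_fun.

Section Mean.
Variables (R : realType) (S : Type) (m : (S -> R) -> R).
Hypothesis mL : forall (a : R) (f g : S -> R), bfun f -> bfun g ->
          m (fun t => a * f t + g t) = a * m f + m g.
Hypothesis mN : forall (f : S -> R) (M : R), (forall t, `|f t| <= M) -> `|m f| <= M.
Hypothesis m1 : m (fun _ => 1) = 1.

Lemma bC (c : R) : bfun (fun _ : S => c).
Proof. by rewrite /Defs.bounded_fun; exists `|c| => t. Qed.

Lemma bD (f g : S -> R) : bfun f -> bfun g ->
  bfun (fun t => f t + g t).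
Proof.
move=> [M1 h1] [M2 h2]; rewrite /Defs.bounded_fun; exists (M1 + M2) => t.
exact: le_trans (ler_normD _ _) (lerD (h1 t) (h2 t)).
Qed.

Lemma bZ (a : R) (f : S -> R) : bfun f -> bfun (fun t => a * f t).
Proof. by move=> [M h]; rewrite /Defs.bounded_fun; exists (`|a| * M) => t; rewrite normrM ler_wpM2l. Qed.

Lemma m0 : m (fun _ => 0) = 0.
Proof. by apply/eqP; rewrite -normr_le0; apply: mN => t; rewrite normr0. Qed.

Lemma mD (f g : S -> R) : bfun f -> bfun g ->
  m (fun t => f t + g t) = m f + m g.
Proof.
move=> bf bg; have := mL 1 f g bf bg; rewrite mul1r => <-; congr m.
by apply/funext => t /=; rewrite mul1r.
Qed.

Lemma mZ (a : R) (f : S -> R) : bfun f -> m (fun t => a * f t) = a * m f.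
Proof.
move=> bf; have := mL a f (fun _ => 0) bf (bC 0); rewrite m0 addr0 => <-; congr m.
by apply/funext => t /=; rewrite addr0.
Qed.

Lemma mC (c : R) : m (fun _ => c) = c.
Proof.
have E : (fun _ : S => c) = (fun t => c * (fun _ => 1) t).
  by apply/funext => t /=; rewrite mulr1.
by rewrite E mZ ?m1 ?mulr1 //; exact: bC.
Qed.

Lemma mle (f : S -> R) (a : R) : bfun f -> (forall t, f t <= a) -> m f <= a.
Proof.
move=> bf fa; case: (bf) => B hB.
have na : - `|a| <= a <= `|a| by rewrite -ler_norml.
case/andP: na => na1 na2.
set k := (B + `|a|) / 2 - a.
have hk : `|m (fun t => f t + k)| <= (B + `|a|) / 2.
  apply: mN => t; rewrite ler_norml; have := hB t; rewrite ler_norml.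
  move=> /andP[h1 h2]; have := fa t => h3.
  rewrite /k; apply/andP; split; lra.
move: hk; rewrite mD // ?mC; last exact: bC.
rewrite ler_norml => /andP[_ h]; rewrite /k in h; lra.
Qed.

Lemma msum (T : Type) (l : seq T) (G : T -> S -> R) :
  (forall z, bfun (G z)) ->
  bfun (fun t => \sum_(z <- l) G z t) /\
  m (fun t => \sum_(z <- l) G z t) = \sum_(z <- l) m (G z).
Proof.
move=> bG; elim: l => [|a l [IHb IHm]].
  have -> : (fun t => \sum_(z <- [::]) G z t) = (fun _ => 0).
    by apply/funext => t /=; rewrite big_nil.
  by rewrite big_nil m0; split => //; exact: bC.
have -> : (fun t => \sum_(z <- a :: l) G z t) =
          (fun t => G a t + \sum_(z <- l) G z t).
  by apply/funext => t /=; rewrite big_cons.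
rewrite big_cons mD // IHm; split => //; exact: bD.
Qed.

End Mean.

Lemma sum_ge_term (R : realType) (T : eqType) (l : seq T) (G : T -> R) z :
  (forall w, 0 <= G w) -> z \in l -> G z <= \sum_(w <- l) G w.
Proof.
move=> G0; elim: l => // a l IH; rewrite in_cons big_cons => /orP[/eqP->|zl].
  by rewrite lerDl sumr_ge0.
apply: le_trans (IH zl) _; by rewrite lerDr.
Qed.

Section Approach.
Variables (R : realType) (S : Type) (m : (S -> R) -> R).
Hypothesis mL : forall (a : R) (f g : S -> R), bfun f -> bfun g ->
          m (fun t => a * f t + g t) = a * m f + m g.
Hypothesis mN : forall (f : S -> R) (M : R), (forall t, `|f t| <= M) -> `|m f| <= M.
Hypothesis m1 : m (fun _ => 1) = 1.
Variables (Z : eqType) (K : set (Z -> R)) (h : S -> Z -> R) (Bz : Z -> R) (s0 : S).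
Hypothesis Kcvx : forall phi psi (a : R), K phi -> K psi -> 0 <= a -> a <= 1 ->
    K (fun z => a * phi z + (1 - a) * psi z).
Hypothesis hK : forall t, K (h t).
Hypothesis Kb : forall x, K x -> forall z, `|x z| <= Bz z.

Lemma approach (zs : seq Z) (e : R) : 0 < e ->
  exists psi, K psi /\
    forall z, z \in zs -> `|psi z - m (fun t => h t z)| < e.
Proof.
move=> e0.
case: (pselect (exists psi, K psi /\
    forall z, z \in zs -> `|psi z - m (fun t => h t z)| < e)) => // Hn.
exfalso.
pose p z := m (fun t => h t z).
pose Q (x : Z -> R) := \sum_(z <- zs) (x z - p z) ^+ 2.
pose D2 := \sum_(z <- zs) (2 * Bz z) ^+ 2.
have bh : forall z, bfun (fun t => h t z).
  by move=> z; rewrite /Defs.bounded_fun; exists (Bz z) => t; apply: Kb.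
have e2 : 0 < e ^+ 2 by rewrite exprn_gt0.
have Q0 : forall x, 0 <= Q x by move=> x; apply: sumr_ge0 => z _; apply: sqr_ge0.
have D20 : 0 <= D2 by apply: sumr_ge0 => z _; apply: sqr_ge0.
have Hfar : forall psi, K psi -> e ^+ 2 <= Q psi.
  move=> psi Kpsi.
  have : ~ (forall z, z \in zs -> `|psi z - p z| < e).
    by move=> H; apply: Hn; exists psi.
  move=> /existsNP [z /not_implyP [zin]] /negP; rewrite -leNgt => hz.
  have G0 : forall w, 0 <= (psi w - p w) ^+ 2 by move=> w; apply: sqr_ge0.
  apply: le_trans (@sum_ge_term _ _ _ _ _ G0 zin).
  move: hz; rewrite ler_normr => /orP[] hz; nra.
have HD : forall x y, K x -> K y -> \sum_(z <- zs) (y z - x z) ^+ 2 <= D2.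
  move=> x y Kx Ky; apply: ler_sum => z _.
  have := Kb x Kx z; have := Kb y Ky z; rewrite !ler_norml.
  move=> /andP[a1 a2] /andP[b1 b2]; nra.
pose lam := e ^+ 2 / (2 * (D2 + e ^+ 2)).
have lamE : 2 * lam * D2 + 2 * lam * e ^+ 2 = e ^+ 2.
  rewrite /lam; field; lra.
have lam0 : 0 < lam by rewrite /lam divr_gt0 // mulr_gt0 //; lra.
have lam1 : lam <= 1 by nra.
have lamD : lam * D2 <= e ^+ 2 / 2.
  have : 0 <= lam * e ^+ 2 by nra.
  lra.
pose c := lam * e ^+ 2 / 2.
have c0 : 0 < c by rewrite /c; apply: divr_gt0 => //; nra.
have step : forall x, K x -> exists x', K x' /\ Q x' <= Q x - c.
  move=> x Kx.
  pose w t := \sum_(z <- zs) (h t z - x z) * (p z - x z).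
  have wG : forall z, bfun (fun t => (h t z - x z) * (p z - x z)).
    move=> z; have -> : (fun t => (h t z - x z) * (p z - x z)) =
      (fun t => (p z - x z) * h t z + (- x z * (p z - x z))).
      by apply/funext => t; ring.
    by apply: bD; [apply: bZ | apply: bC].
  have [wb wm] := @msum R S m mL mN _ zs _ wG.
  have mw : m w = Q x.
    rewrite /w wm /Q; apply: eq_bigr => z _.
    have -> : (fun t => (h t z - x z) * (p z - x z)) =
      (fun t => (p z - x z) * h t z + (- x z * (p z - x z))).
      by apply/funext => t; ring.
    rewrite (@mD R S m mL) ?(@mZ R S m mL mN) ?(@mC R S m mL mN m1) //.
    all: try by [apply: bC | apply: bZ; apply: bh | apply: bh].
    rewrite /p; ring.
  have [t ht] : exists t, Q x - e ^+ 2 / 2 <= w t.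
    apply/not_existsP => H.
    have : m w <= Q x - e ^+ 2 / 2.
      apply: (@mle R S m mL mN m1) => // t; have := H t; move/negP; rewrite -ltNge.
      by move/ltW.
    rewrite mw; lra.
  exists (fun z => lam * h t z + (1 - lam) * x z); split.
    by apply: Kcvx => //; apply: ltW.
  have HQ := Hfar x Kx.
  have HY := HD x (h t) Kx (hK t).
  set Y := \sum_(z <- zs) (h t z - x z) ^+ 2 in HY.
  have -> : Q (fun z => lam * h t z + (1 - lam) * x z) =
            Q x + (- (2 * lam)) * w t + lam ^+ 2 * Y.
    rewrite /Q /w /Y mulr_sumr mulr_sumr -!big_split /=.
    by apply: eq_bigr => z _; ring.
  have h1 : lam * (Q x - e ^+ 2 / 2) <= lam * w t by rewrite ler_wpM2l // ltW.
  have h2 : lam ^+ 2 * Y <= lam ^+ 2 * D2 by rewrite ler_wpM2l // sqr_ge0.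
  have h3 : lam * (lam * D2) <= lam * (e ^+ 2 / 2) by rewrite ler_wpM2l // ltW.
  have h4 : lam * e ^+ 2 <= lam * Q x by rewrite ler_wpM2l // ltW.
  rewrite /c; nra.
have iter : forall n : nat, exists x, K x /\ Q x <= Q (h s0) - n%:R * c.
  elim => [|n [x [Kx hx]]].
    by exists (h s0); split => //; rewrite mul0r subr0.
  have [x' [Kx' hx']] := step x Kx.
  exists x'; split => //.
  rewrite -[n.+1]addn1 natrD mulrDl mul1r; lra.
have Qs0 := Q0 (h s0).
have := archi_boundP (divr_ge0 Qs0 (ltW c0)).
set n := Num.Def.archi_bound _ => hn.
rewrite ltr_pdivrMr // in hn.
have [x [Kx hx]] := iter n.
have := Hfar x Kx.
lra.
Qed.

End Approach.

Theorem theorem11 (R : realType) (S : Type) (add : S -> S -> S) (zero : S)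
    (opp : S -> S) (Z : completeNormedModType R) (F : S -> set (Z -> R)) :
  is_group add zero opp ->
  left_amenable R add ->
  (forall s, W_wbc (F s)) ->
  (exists g : S -> Z -> R,
      [/\ forall s, dual_elt (g s),
          forall s t z, g (add s t) z = g s z + g t z
        & forall s, F s (g s)])
  <->
  (exists f : S -> Z -> R,
      (forall s, dual_elt (f s)) /\
      forall s t, F s (fun z => f (add s t) z - f t z)).
Proof.
move=> Hgrp Ham HF; split.
  case=> g [gd gadd gF]; exists g; split => // s t.
  have -> : (fun z => g (add s t) z - g t z) = g s.
    by apply/funext => z; rewrite gadd addrK.
  exact: gF.
case=> f [fd fF].
case: Ham => m [mL mN m1 mI].
case: Hgrp => gassoc _ _.
have hb : forall s, exists M, forall t z, `|f (add s t) z - f t z| <= M * `|z|.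
  move=> s; case: (HF s) => _ _ _ [M hM] _; exists M => t z; exact: hM _ (fF s t) z.
have bnd : forall s z (u : S -> S), bfun (fun t => f (add s (u t)) z - f (u t) z).
  move=> s z u; case: (hb s) => M hM; rewrite /Defs.bounded_fun.
  by exists (M * `|z|) => t; apply: hM.
pose g s z := m (fun t => f (add s t) z - f t z).
have glin : forall s (a : R) (x y : Z), g s (a *: x + y) = a * g s x + g s y.
  move=> s a x y; rewrite /g -mL; [|exact: (bnd s x id)|exact: (bnd s y id)].
  congr m; apply/funext => t /=.
  case: (fd (add s t)) => l1 _; case: (fd t) => l2 _; rewrite l1 l2; ring.
have gd : forall s, dual_elt (g s).
  move=> s; split; first exact: glin.
  case: (hb s) => M hM.
  have gb : forall z, `|g s z| <= (`|M| + 1) * `|z|.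
    move=> z; apply: mN => t; apply: le_trans (hM t z) _.
    apply: ler_wpM2r => //; apply: le_trans (ler_norm M) _; lra.
  have K0 : 0 < `|M| + 1 by have := normr_ge0 M; lra.
  move=> x; apply/cvgrPdist_lt => eps e0.
  have d0 : 0 < eps / (`|M| + 1) by apply: divr_gt0.
  have H : \forall t \near x, `|x - t| < eps / (`|M| + 1).
    exact: (@cvgr_dist_lt R Z Z (nbhs x) (nbhs_filter x) id x cvg_id _ d0).
  apply: filterS H => y /= hy.
  have -> : g s x - g s y = g s (x - y).
    have E := glin s (-1) y x.
    rewrite scaleN1r mulN1r (addrC (- y)) in E.
    by rewrite E addrC.
  apply: le_lt_trans (gb _) _.
  by rewrite mulrC -ltr_pdivlMr.
exists g; split => //.
- move=> s s' z; rewrite /g.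
  have E : (fun t => f (add (add s s') t) z - f t z) =
    (fun t => 1 * (f (add s (add s' t)) z - f (add s' t) z) + (f (add s' t) z - f t z)).
    by apply/funext => t /=; rewrite gassoc mul1r subrKA.
  rewrite E mL ?mul1r; last first.
  + exact: (bnd s' z id).
  + exact: (bnd s z (add s')).
  congr (_ + _).
  by rewrite [m (fun t => f (add s t) z - f t z)](mI _ s') //; exact: (bnd s z id).
- move=> s; case: (pselect (F s (g s))) => // Hn; exfalso.
  case: (HF s) => sub ne wc [M hM] cv.
  case: (wc _ (gd s) Hn) => zs [e [e0 He]].
  have [psi [Kpsi close]] := @approach R S m mL mN m1 Z (F s)
     (fun t z => f (add s t) z - f t z) (fun z => M * `|z|) zero cv (fF s)
     hM zs e e0.
  exact: (He psi (sub _ Kpsi) close Kpsi).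
Qed.
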